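(* Let $K\ge1$, $V^{\mathrm c}>0$, and for each $k$ let $\alpha_k>0$ with $\sum_k\alpha_k=1$, $L_k>0$, $V_k^{\mathrm d}>0$, $R_k>0$. Define \[ \overline D_k(t_k,V_k^{\mathrm c})=\frac{L_k(t_kR_k+V_k^{\mathrm c})}{V_k^{\mathrm d}V_k^{\mathrm c}+t_kR_k(V_k^{\mathrm d}+V_k^{\mathrm c})} \] and consider \[ \min_{\{t_k,V_k^{\mathrm c}\}}\sum_{k=1}^K\alpha_k\overline D_k\quad\text{s.t.}\quad \sum_{k=1}^K t_k\le1,\ t_k\ge0,\quad \sum_{k=1}^K V_k^{\mathrm c}\le V^{\mathrm c},\ V_k^{\mathrm c}\ge0. \] Then the optimal solution $\{\overline t_k^*,\overline V_k^{\mathrm c*}\}$ is given by \[ \overline t_k^*=\frac{\overline V_k^{\mathrm c*}\left(\sqrt{\frac{\alpha_kL_kR_k}{\theta^*}}-V_k^{\mathrm d}\right)^+}{R_k(V_k^{\mathrm d}+\overline V_k^{\mathrm c*})},\qquad \overline V_k^{\mathrm c*}=\frac{\overline t_k^*R_k\left(\sqrt{\frac{\alpha_kL_k}{\omega^*}}-V_k^{\mathrm d}\right)^+}{\overline t_k^*R_k+V_k^{\mathrm d}},\qquad\forall k, \] where $(y)^+=\max\{y,0\}$ and $\theta^*,\omega^*$ are the optimal Lagrange multipliers associated with the constraints $\sum_k t_k\le1$ and $\sum_kV_k^{\mathrm c}\le V^{\mathrm c}$, respectively, which satisfy the active constraints $\sum_{k=1}^K\overline t_k^*=1$ and $\sum_{k=1}^K\overline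 V_k^{\mathrm c*}=V^{\mathrm c}$.
   Context: $\overline D_k$ is the end-to-end delay of device $k$ in the partial compression offloading model in the special scenario where the transmission delay of the locally compressed data is neglected, after choosing the locally compressed fraction optimally: $L_k$ raw bits, local compression speed $V_k^{\mathrm d}$, TDMA time fraction $t_k$, average channel rate $R_k$, edge compression speed $V_k^{\mathrm c}$ out of a total $V^{\mathrm c}$. *)

(* Defs.v *)
From mathcomp Require Import all_boot all_order all_algebra.
From mathcomp Require Import reals.
Set Implicit Arguments. Unset Strict Implicit. Unset Printing Implicit Defensive.
Import Order.TTheory GRing.Theory Num.Theory.
Local Open Scope ring_scope.

Section Defs.
Variable R : realType.

Definition posp (y : R) : R := Num.max y 0.

(* The denominator vanishes (for nonnegative t, Vc and positive R, Vd)
   only when t = Vc = 0; there we use the continuous extension L / Vd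
   (the value of the formula along t = 0 or along Vc = 0). *)
Definition Dbar (L Vd Rk t Vc : R) : R :=
  let den := Vd * Vc + t * Rk * (Vd + Vc) in
  if den == 0 then L / Vd else L * (t * Rk + Vc) / den.

Variable K : nat.

Definition feasible (Vctot : R) (t Vc : 'I_K -> R) : Prop :=
  (forall k, 0 <= t k) /\ \sum_(k < K) t k <= 1 /\
  (forall k, 0 <= Vc k) /\ \sum_(k < K) Vc k <= Vctot.

Definition objective (alpha L Vd Rk : 'I_K -> R) (t Vc : 'I_K -> R) : R :=
  \sum_(k < K) alpha k * Dbar (L k) (Vd k) (Rk k) (t k) (Vc k).

Definition optimal (Vctot : R) (alpha L Vd Rk : 'I_K -> R) (t Vc : 'I_K -> R) : Prop :=
  feasible Vctot t Vc /\
  forall t' Vc', feasible Vctot t' Vc' ->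
    objective alpha L Vd Rk t Vc <= objective alpha L Vd Rk t' Vc'.

End Defs.

(* Main.v *)
Require Import Defs.
From mathcomp Require Import all_boot all_order all_algebra.
From mathcomp Require Import reals.
From mathcomp Require Import classical_sets boolp topology normedtype derive.
From mathcomp Require Import ring lra.
Import Order.TTheory GRing.Theory Num.Theory.
Import numFieldNormedType.Exports.
Local Open Scope ring_scope.

Section Helpers.
Local Open Scope classical_set_scope.
Section S.
Variable R : realType.

Definition Hh (x y : R) := Num.max x 0 * Num.max y 0 / (Num.max x 0 + Num.max y 0).

Lemma Hh_ge0 x y : 0 <= Hh x y.
Proof.
by rewrite /Hh divr_ge0 ?mulr_ge0 ?addr_ge0 ?le_max ?lexx ?orbT.
Qed.

Lemma Hh_le x y : Hh x y <= Num.max x 0.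
Proof.
rewrite /Hh.
have hx : 0 <= Num.max x 0 by rewrite le_max lexx orbT.
have hy : 0 <= Num.max y 0 by rewrite le_max lexx orbT.
have [->|] := eqVneq (Num.max x 0 + Num.max y 0) 0.
  by rewrite invr0 mulr0.
move=> hne.
have hpos : 0 < Num.max x 0 + Num.max y 0 by rewrite lt_def hne addr_ge0.
rewrite ler_pdivrMr //. nra.
Qed.

Lemma fst_cont (p : R * R) : (fun q : R * R => q.1) @ p --> p.1.
Proof. case: p => x y; exact: cvg_fst. Qed.
Lemma snd_cont (p : R * R) : (fun q : R * R => q.2) @ p --> p.2.
Proof. case: p => x y; exact: cvg_snd. Qed.

Lemma maxfst_cont (p : R * R) : (fun q : R * R => Num.max q.1 0) @ p --> Num.max p.1 0.
Proof.
apply: (@continuous_max _ _ (fun q : R * R => q.1) (fun _ => 0)).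
  exact: fst_cont.
exact: cvg_cst.
Qed.
Lemma maxsnd_cont (p : R * R) : (fun q : R * R => Num.max q.2 0) @ p --> Num.max p.2 0.
Proof.
apply: (@continuous_max _ _ (fun q : R * R => q.2) (fun _ => 0)).
  exact: snd_cont.
exact: cvg_cst.
Qed.

Lemma Hh_cont : continuous (fun p : R * R => Hh p.1 p.2).
Proof.
move=> p.
have hx : 0 <= Num.max p.1 0 by rewrite le_max lexx orbT.
have hy : 0 <= Num.max p.2 0 by rewrite le_max lexx orbT.
have [h0|hne] := eqVneq (Num.max p.1 0 + Num.max p.2 0) 0.
  have x0 : Num.max p.1 0 = 0.
    move: h0 hx hy; set a := Num.max p.1 0; set b := Num.max p.2 0; lra.
  have hp : Hh p.1 p.2 = 0 by rewrite /Hh h0 invr0 mulr0.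
  rewrite /continuous_at hp.
  apply: (@squeeze_cvgr _ _ _ _ (fun _ => 0) (fun q : R * R => Num.max q.1 0)).
  - by apply: nearW => q; rewrite Hh_ge0 Hh_le.
  - exact: cvg_cst.
  - by have := maxfst_cont p; rewrite x0.
apply: cvgM; first exact: cvgM (maxfst_cont p) (maxsnd_cont p).
apply: cvgV => //.
exact: cvgD (maxfst_cont p) (maxsnd_cont p).
Qed.
Lemma Dbar_eq (L Vd Rk t V : R) : 0 < Vd -> 0 < Rk -> 0 <= t -> 0 <= V ->
  Dbar L Vd Rk t V = L / (Vd + Hh (t * Rk) V).
Proof.
move=> hVd hR ht hV.
have ha : 0 <= t * Rk by rewrite mulr_ge0 // ltW.
rewrite /Dbar /Hh.
have -> : Num.max (t * Rk) 0 = t * Rk by apply/max_idPl.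
have -> : Num.max V 0 = V by apply/max_idPl.
have [hd|hd] := eqVneq (Vd * V + t * Rk * (Vd + V)) 0.
  have hV0 : V = 0 by nra.
  have ha0 : t * Rk = 0 by nra.
  by rewrite hV0 ha0 !addr0 mulr0 mul0r addr0.
have haV : t * Rk + V != 0.
  apply/negP => /eqP h; move/eqP: hd; apply.
  have hV0 : V = 0 by nra.
  have ha0 : t * Rk = 0 by nra.
  by rewrite hV0 ha0; ring.
have -> : Vd + t * Rk * V / (t * Rk + V) = (Vd * V + t * Rk * (Vd + V)) / (t * Rk + V).
  by field.
by rewrite invf_div mulrA.
Qed.
Lemma pos_add (a b : R) : 0 < a -> 0 <= b -> a + b != 0.
Proof. move=> *; rewrite gt_eqF //; lra. Qed.
Variable K : nat.
Section Ex.
Import ArrowAsProduct.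
Lemma proj_fst_cont (k : 'I_K) (p : ('I_K -> R) * ('I_K -> R)) :
  (fun q : ('I_K -> R) * ('I_K -> R) => q.1 k) @ p --> p.1 k.
Proof.
apply: (cvg_comp (fun q : ('I_K -> R) * ('I_K -> R) => q.1) (fun f : 'I_K -> R => f k)).
  case: p => x y; exact: cvg_fst.
exact: (@proj_continuous _ (fun _ => R) k).
Qed.
Lemma proj_snd_cont (k : 'I_K) (p : ('I_K -> R) * ('I_K -> R)) :
  (fun q : ('I_K -> R) * ('I_K -> R) => q.2 k) @ p --> p.2 k.
Proof.
apply: (cvg_comp (fun q : ('I_K -> R) * ('I_K -> R) => q.2) (fun f : 'I_K -> R => f k)).
  case: p => x y; exact: cvg_snd.
exact: (@proj_continuous _ (fun _ => R) k).
Qed.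
Lemma B_compact (a b : R) : compact [set f : 'I_K -> R | forall i, (`[a, b]%classic : set R) (f i)].
Proof. exact: (@tychonoff _ (fun _ => R) (fun _ => (`[a, b]%classic : set R)) (fun _ => @segment_compact R a b)). Qed.

Lemma sum_cont (T : topologicalType) (f : 'I_K -> T -> R) :
  (forall k, continuous (f k)) -> continuous (fun x => \sum_(k < K) f k x).
Proof.
move=> hf.
exact: (@continuous_big R _ +%R 0 xpredT add_continuous T (index_enum 'I_K) f (fun k _ => hf k)).
Qed.

Lemma le_sum_term (f : 'I_K -> R) i : (forall k, 0 <= f k) -> f i <= \sum_(k < K) f k.
Proof.
move=> h; rewrite (bigD1 i) //= lerDl; exact: sumr_ge0.
Qed.

Lemma Gcont_R (a l vd r : R) : 0 < vd ->
  continuous (fun x : R * R => a * (l / (vd + Hh (x.1 * r) x.2))).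
Proof.
move=> hvd x.
apply: cvgMl_tmp; apply: cvgMl_tmp; apply: cvgV.
  exact: pos_add hvd (Hh_ge0 _ _).
apply: cvgD; first exact: cvg_cst.
have h11 : (fun q : R * R => q.1 * r) @ x --> x.1 * r.
  exact: (@cvgMr_tmp _ _ _ _ _ _ r (fst_cont x)).
have h1 : (fun q : R * R => (q.1 * r, q.2)) @ x --> (x.1 * r, x.2).
  exact: (cvg_pair h11 (snd_cont x)).
exact: (cvg_comp _ _ h1 (Hh_cont (x.1 * r, x.2))).
Qed.
Lemma exists_opt (Vctot : R) (alpha L Vd Rk : 'I_K -> R) :
  0 <= Vctot -> (forall k, 0 < Vd k) -> (forall k, 0 < Rk k) ->
  exists t Vc, optimal Vctot alpha L Vd Rk t Vc.
Proof.
move=> hV hVd hR.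
pose G k (p : ('I_K -> R) * ('I_K -> R)) :=
  alpha k * (L k / (Vd k + Hh (p.1 k * Rk k) (p.2 k))).
pose F p := \sum_(k < K) G k p.
pose A := [set p : ('I_K -> R) * ('I_K -> R) | feasible Vctot p.1 p.2].
have A0 : A !=set0.
  exists (fun _ => 0, fun _ => 0); rewrite /A /feasible /= !big1 //.
have cA : compact A.
  have -> : A = ([set f : 'I_K -> R | forall i, (`[0, 1]%classic : set R) (f i)] `*`
      [set f : 'I_K -> R | forall i, (`[0, Vctot]%classic : set R) (f i)]) `&`
      ((fun p : ('I_K -> R) * ('I_K -> R) => \sum_(k < K) p.1 k) @^-1` [set x | x <= 1] `&`
       (fun p : ('I_K -> R) * ('I_K -> R) => \sum_(k < K) p.2 k) @^-1` [set x | x <= Vctot]).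
    apply/seteqP; split.
    - move=> [t v] /= [ht [st [hv sv]]]; split; [split|split] => //= i;
        rewrite in_itv /= ?ht ?hv /=.
      + exact: le_trans (@le_sum_term t i ht) st.
      + exact: le_trans (@le_sum_term v i hv) sv.
    - move=> [t v] [[/= bt bv] [/= st sv]]; split; last split => //; last split => //.
      + by move=> i; have := bt i; rewrite /= in_itv /= => /andP[].
      + by move=> i; have := bv i; rewrite /= in_itv /= => /andP[].
  apply: compact_closedI.
    by apply: compact_setX; exact: B_compact.
  apply: closedI; (apply: preimage_closed; last first; [exact: closed_le|]);
    move=> p _; apply: sum_cont => k q.
    exact: proj_fst_cont.
  exact: proj_snd_cont.
have cF : {within A, continuous F}.
  apply: continuous_subspaceT; apply: sum_cont => k p.
  have hp : (fun q : ('I_K -> R) * ('I_K -> R) => (q.1 k, q.2 k)) @ p --> (p.1 k, p.2 k).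
    exact: (cvg_pair (proj_fst_cont k p) (proj_snd_cont k p)).
  have := (cvg_comp _ _ hp (Gcont_R (alpha k) (L k) (Vd k) (Rk k) (hVd k) (p.1 k, p.2 k))); apply.
have [c cAin cmin] := compact_EVT_min A0 cA cF.
have objF t v : feasible Vctot t v -> objective alpha L Vd Rk t v = F (t, v).
  move=> [ht [_ [hv _]]]; rewrite /objective /F; apply: eq_bigr => k _.
  by rewrite /G /= Dbar_eq.
rewrite inE in cAin.
exists c.1, c.2; split => // t' v' hf.
rewrite objF // objF //; case: c cAin cmin => c1 c2 cAin cmin.
apply: cmin; rewrite inE; exact: hf.
Qed.
End Ex.

Definition den (Vd r x y : R) := Vd * y + x * r * (Vd + y).

Lemma Dbar_sym (L Vd r x y : R) : Dbar L Vd r x y = Dbar L Vd 1 y (x * r).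
Proof.
rewrite /Dbar.
have -> : Vd * (x * r) + y * 1 * (Vd + x * r) = Vd * y + x * r * (Vd + y) by ring.
have -> : L * (y * 1 + x * r) = L * (x * r + y) by ring.
done.
Qed.

Lemma den_pos (Vd r x y : R) : 0 < Vd -> 0 < r -> 0 <= x -> 0 < y -> 0 < den Vd r x y.
Proof.
move=> hVd hr hx hy; rewrite /den.
have h1 : 0 < Vd * y by rewrite mulr_gt0.
have h2 : 0 <= x * r * (Vd + y) by rewrite !mulr_ge0 // ltW // addr_gt0.
lra.
Qed.

Lemma Dbar_eqd (L Vd r x y : R) : den Vd r x y != 0 ->
  Dbar L Vd r x y = L * (x * r + y) / den Vd r x y.
Proof. by rewrite /Dbar /den => /negbTE ->. Qed.

Lemma Dbar_y0 (L Vd r x : R) : 0 < Vd -> 0 < r -> 0 <= x -> Dbar L Vd r x 0 = L / Vd.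
Proof.
move=> hVd hr hx; rewrite /Dbar mulr0 add0r addr0.
case: eqP => // /eqP h.
have hx0 : x != 0 by apply: contraNneq h => ->; rewrite !mul0r.
field; rewrite hx0 (gt_eqF hr) (gt_eqF hVd) //.
Qed.

Lemma Dbar_le (L Vd r x y : R) : 0 <= L -> 0 < Vd -> 0 < r -> 0 <= x -> 0 <= y ->
  Dbar L Vd r x y <= L / Vd.
Proof.
move=> hL hVd hr hx hy; rewrite /Dbar; case: eqP => // /eqP h.
have h0 : 0 <= Vd * y + x * r * (Vd + y) by rewrite addr_ge0 ?mulr_ge0 // ?addr_ge0 // ltW.
have hd : 0 < Vd * y + x * r * (Vd + y) by rewrite lt_def h.
rewrite ler_pdivrMr // mulrAC ler_pdivlMr //.
have : 0 <= L * (x * r * y) by rewrite !mulr_ge0 // ltW.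
nra.
Qed.

Lemma Dbar_lt (L Vd r x y : R) : 0 < L -> 0 < Vd -> 0 < r -> 0 < x -> 0 < y ->
  Dbar L Vd r x y < L / Vd.
Proof.
move=> hL hVd hr hx hy.
have hd : 0 < den Vd r x y by apply: den_pos => //; exact: ltW.
rewrite Dbar_eqd ?gt_eqF //.
have e : L / Vd - L * (x * r + y) / den Vd r x y = L * (x * r * y) / (Vd * den Vd r x y).
  rewrite /den in hd *; field; rewrite ?gt_eqF //.
rewrite -subr_gt0 e; apply: divr_gt0; rewrite !mulr_gt0 //.
Qed.

Lemma Dbar_diff (L Vd r x x' y : R) : 0 < Vd -> 0 < r -> 0 <= x -> 0 <= x' -> 0 < y ->
  Dbar L Vd r x' y - Dbar L Vd r x y =
  - (L * r * y ^+ 2 * (x' - x)) / (den Vd r x' y * den Vd r x y).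
Proof.
move=> hVd hr hx hx' hy.
have h1 : 0 < den Vd r x y by apply: den_pos.
have h2 : 0 < den Vd r x' y by apply: den_pos.
rewrite !Dbar_eqd ?gt_eqF //.
rewrite /den in h1 h2 *.
field; rewrite ?gt_eqF //.
Qed.
Lemma Dbar_x0 (L Vd r y : R) : 0 < Vd -> 0 <= y -> Dbar L Vd r 0 y = L / Vd.
Proof. by move=> hVd hy; rewrite Dbar_sym mul0r Dbar_y0. Qed.

Lemma Dbar_decr (L Vd r x x' y : R) : 0 < L -> 0 < Vd -> 0 < r -> 0 <= x -> x < x' -> 0 < y ->
  Dbar L Vd r x' y < Dbar L Vd r x y.
Proof.
move=> hL hVd hr hx hxx hy.
have hx' : 0 <= x' by apply: le_trans (ltW hxx).
rewrite -subr_lt0 Dbar_diff // mulNr oppr_lt0; apply: divr_gt0.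
  by rewrite !mulr_gt0 ?exprn_gt0 // subr_gt0.
by rewrite mulr_gt0 // den_pos.
Qed.

Lemma sum_lt (u w : 'I_K -> R) i : (forall k, u k <= w k) -> u i < w i ->
  \sum_(k < K) u k < \sum_(k < K) w k.
Proof.
move=> h hi; rewrite (bigD1 i) //= [X in _ < X](bigD1 i) //=.
by apply: ltr_leD => //; apply: ler_sum => k _; exact: h.
Qed.

Lemma sum1 (u w : 'I_K -> R) i : (forall k, k != i -> u k = w k) ->
  \sum_(k < K) u k = \sum_(k < K) w k + (u i - w i).
Proof.
move=> h; rewrite (bigD1 i) //= [in RHS](bigD1 i) //=.
rewrite (eq_bigr w (fun k hk => h k hk)); ring.
Qed.

Lemma sum2 (u w : 'I_K -> R) i j : i != j -> (forall k, k != i -> k != j -> u k = w k) ->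
  \sum_(k < K) u k = \sum_(k < K) w k + (u i - w i) + (u j - w j).
Proof.
move=> hij h.
pose v k := if k == i then u k else w k.
rewrite (@sum1 u v j); last first.
  by move=> k hk; rewrite /v; case: eqP => // /eqP hki; rewrite h.
rewrite (@sum1 v w i); last by move=> k hk; rewrite /v (negbTE hk).
by rewrite /v eqxx eq_sym (negbTE hij).
Qed.

Definition Gsum (alpha L Vd rho x y : 'I_K -> R) :=
  \sum_(k < K) alpha k * Dbar (L k) (Vd k) (rho k) (x k) (y k).

Lemma gen_move (alpha L Vd rho x y : 'I_K -> R) k j :
  (forall m, 0 < alpha m) -> (forall m, 0 < L m) -> (forall m, 0 < Vd m) ->
  (forall m, 0 < rho m) -> (forall m, 0 <= x m) -> (forall m, 0 <= y m) ->
  k != j -> 0 < x k -> y k = 0 -> 0 < y j ->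
  exists x', (forall m, 0 <= x' m) /\ \sum_(m < K) x' m = \sum_(m < K) x m /\
    Gsum alpha L Vd rho x' y < Gsum alpha L Vd rho x y.
Proof.
move=> ha hL hVd hr hx hy hkj hxk hyk hyj.
pose x' m := if m == k then 0 else if m == j then x j + x k else x m.
have hx'k : x' k = 0 by rewrite /x' eqxx.
have hx'j : x' j = x j + x k by rewrite /x' eq_sym (negbTE hkj) eqxx.
exists x'; split; [|split].
- move=> m; rewrite /x'; case: eqP => // _; case: eqP => // _.
  by rewrite addr_ge0 // ltW.
- rewrite (@sum2 x' x k j) //; first by rewrite hx'k hx'j; ring.
  by move=> m hm1 hm2; rewrite /x' (negbTE hm1) (negbTE hm2).
- apply: (@sum_lt _ _ j) => [m|].
    rewrite /x'; case: (eqVneq m k) => [->|hmk].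
      by rewrite hyk !Dbar_y0 ?hVd ?hr // ltW.
    case: (eqVneq m j) => [->|_] //.
    rewrite ler_pM2l ?ha //; apply: ltW; apply: Dbar_decr; rewrite ?hL ?hVd ?hr ?hx //.
    by rewrite ltrDl.
  rewrite hx'j ltr_pM2l ?ha //; apply: Dbar_decr; rewrite ?hL ?hVd ?hr ?hx //.
  by rewrite ltrDl.
Qed.

Lemma gen_incr (alpha L Vd rho x y : 'I_K -> R) j d :
  (forall m, 0 < alpha m) -> (forall m, 0 < L m) -> (forall m, 0 < Vd m) ->
  (forall m, 0 < rho m) -> (forall m, 0 <= x m) ->
  0 < d -> 0 < y j ->
  exists x', (forall m, 0 <= x' m) /\ \sum_(m < K) x' m = \sum_(m < K) x m + d /\
    Gsum alpha L Vd rho x' y < Gsum alpha L Vd rho x y.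
Proof.
move=> ha hL hVd hr hx hd hyj.
pose x' m := if m == j then x j + d else x m.
have hx'j : x' j = x j + d by rewrite /x' eqxx.
exists x'; split; [|split].
- move=> m; rewrite /x'; case: eqP => // _.
  by rewrite addr_ge0 // ltW.
- rewrite (@sum1 x' x j); first by rewrite hx'j; ring.
  by move=> m hm; rewrite /x' (negbTE hm).
- apply: (@sum_lt _ _ j) => [m|].
    rewrite /x'; case: (eqVneq m j) => [->|_] //.
    rewrite ler_pM2l ?ha //; apply: ltW; apply: Dbar_decr; rewrite ?hL ?hVd ?hr ?hx //.
    by rewrite ltrDl.
  rewrite hx'j ltr_pM2l ?ha //; apply: Dbar_decr; rewrite ?hL ?hVd ?hr ?hx //.
  by rewrite ltrDl.
Qed.

Definition gfun (alpha L Vd rho x y : 'I_K -> R) m :=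
  alpha m * L m * rho m * y m ^+ 2 / den (Vd m) (rho m) (x m) (y m) ^+ 2.


Lemma gen_transfer (alpha L Vd rho x y : 'I_K -> R) i j :
  (forall m, 0 < alpha m) -> (forall m, 0 < L m) -> (forall m, 0 < Vd m) ->
  (forall m, 0 < rho m) -> (forall m, 0 <= x m) -> (forall m, 0 <= y m) ->
  i != j -> 0 < x j -> 0 < y i -> 0 < y j ->
  gfun alpha L Vd rho x y j < gfun alpha L Vd rho x y i ->
  exists x', (forall m, 0 <= x' m) /\ \sum_(m < K) x' m = \sum_(m < K) x m /\
    Gsum alpha L Vd rho x' y < Gsum alpha L Vd rho x y.
Proof.
move=> ha hL hVd hr hx hy hij hxj hyi hyj hg.
set p := den (Vd i) (rho i) (x i) (y i).
set q := rho i * (Vd i + y i).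
set r := den (Vd j) (rho j) (x j) (y j).
set s := rho j * (Vd j + y j).
have hp : 0 < p by apply: den_pos.
have hr0 : 0 < r by apply: den_pos.
have hq : 0 <= q by rewrite mulr_ge0 // ltW // addr_gt0.
have hs : 0 <= s by rewrite mulr_ge0 // ltW // addr_gt0.
set A := alpha i * L i * rho i * y i ^+ 2 / p.
set B := alpha j * L j * rho j * y j ^+ 2 / r.
have hA : 0 < A by rewrite divr_gt0 // !mulr_gt0 // exprn_gt0.
have hB : 0 < B by rewrite divr_gt0 // !mulr_gt0 // exprn_gt0.
have egi : gfun alpha L Vd rho x y i = A / p.
  by rewrite /gfun -/p /A expr2; field; rewrite gt_eqF.
have egj : gfun alpha L Vd rho x y j = B / r.
  by rewrite /gfun -/r /B expr2; field; rewrite gt_eqF.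
set E := A * r - B * p.
have hE : 0 < E.
  have -> : E = (A / p - B / r) * (p * r) by rewrite /E; field; rewrite !gt_eqF.
  by rewrite mulr_gt0 ?mulr_gt0 // subr_gt0 -egi -egj.
set M := B * q + A * s.
have hM : 0 <= M by rewrite addr_ge0 // mulr_ge0 // ltW.
have hM1 : 0 < 2 * M + 1 by lra.
set e := Num.min (x j / 2) (E / (2 * M + 1)).
have he : 0 < e by rewrite lt_min divr_gt0 // divr_gt0.
have he1 : e <= x j / 2 by rewrite ge_min lexx.
have he2 : e <= E / (2 * M + 1) by rewrite ge_min lexx orbT.
have he3 : e * (2 * M + 1) <= E by rewrite -ler_pdivlMr.
have heM : 0 <= e * M by rewrite mulr_ge0 // ltW.
have hxje : 0 <= x j - e by lra.
pose x' m := if m == i then x i + e else if m == j then x j - e else x m.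
have hx'i : x' i = x i + e by rewrite /x' eqxx.
have hx'j : x' j = x j - e by rewrite /x' eq_sym (negbTE hij) eqxx.
have hxie : 0 <= x i + e by rewrite addr_ge0 // ltW.
exists x'; split; [|split].
- move=> m; rewrite /x'; case: eqP => // _; case: eqP => // _.
- rewrite (@sum2 x' x i j) //; first by rewrite hx'i hx'j; ring.
  by move=> m hm1 hm2; rewrite /x' (negbTE hm1) (negbTE hm2).
pose u m := alpha m * Dbar (L m) (Vd m) (rho m) (x' m) (y m).
pose w m := alpha m * Dbar (L m) (Vd m) (rho m) (x m) (y m).
have hsum : \sum_(k < K) u k = \sum_(k < K) w k + (u i - w i) + (u j - w j).
  apply: sum2 => // m hm1 hm2.
  by rewrite /u /w /x' (negbTE hm1) (negbTE hm2).
rewrite /Gsum -/(u _) -/(w _) hsum /u /w hx'i hx'j -!mulrBr !Dbar_diff //.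
have dpi : den (Vd i) (rho i) (x i + e) (y i) = p + e * q by rewrite /p /q /den; ring.
have dpj : den (Vd j) (rho j) (x j - e) (y j) = r - e * s by rewrite /r /s /den; ring.
have hrs : 0 < r - e * s by rewrite -dpj; apply: den_pos.
have hpq : 0 < p + e * q by rewrite -dpi; apply: den_pos.
rewrite dpi dpj -/p -/r.
have e1 : alpha i * (- (L i * rho i * y i ^+ 2 * (x i + e - x i)) / ((p + e * q) * p))
   = - (e * A / (p + e * q)).
  by rewrite /A; field; rewrite !gt_eqF.
have e2 : alpha j * (- (L j * rho j * y j ^+ 2 * (x j - e - x j)) / ((r - e * s) * r))
   = e * B / (r - e * s).
  by rewrite /B; field; rewrite !gt_eqF.
rewrite e1 e2.
have key : 0 < A / (p + e * q) - B / (r - e * s).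
  have -> : A / (p + e * q) - B / (r - e * s) =
    (A * (r - e * s) - B * (p + e * q)) / ((p + e * q) * (r - e * s)).
    by field; rewrite !gt_eqF.
  apply: divr_gt0; last by rewrite mulr_gt0.
  have -> : A * (r - e * s) - B * (p + e * q) = E - e * M by rewrite /E /M; ring.
  nra.
have : 0 < e * (A / (p + e * q) - B / (r - e * s)) by rewrite mulr_gt0.
rewrite mulrBr !mulrA; lra.
Qed.
Lemma formula (a l vd rho x y : R) : 0 < a -> 0 < l -> 0 < vd -> 0 < rho -> 0 <= x -> 0 < y ->
  x = y * posp (Num.sqrt (a * l * rho / (a * l * rho * y ^+ 2 / den vd rho x y ^+ 2)) - vd)
      / (rho * (vd + y)).
Proof.
move=> ha hl hvd hr hx hy.
have hd : 0 < den vd rho x y by apply: den_pos.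
have -> : a * l * rho / (a * l * rho * y ^+ 2 / den vd rho x y ^+ 2) = (den vd rho x y / y) ^+ 2.
  by field; rewrite !gt_eqF.
rewrite sqrtr_sqr ger0_norm; last by rewrite divr_ge0 // ltW.
have -> : den vd rho x y / y - vd = x * rho * (vd + y) / y.
  by rewrite /den; field; rewrite gt_eqF.
have hpos : 0 <= x * rho * (vd + y) / y.
  apply: divr_ge0; last exact: ltW.
  apply: mulr_ge0; first exact: mulr_ge0 hx (ltW hr).
  exact: ltW (addr_gt0 hvd hy).
rewrite /posp (max_idPl hpos).
field; rewrite !gt_eqF // addr_gt0 //.
Qed.

Lemma part2 (Vctot : R) (alpha L Vd Rk : 'I_K -> R) :
  (1 <= K)%N -> 0 < Vctot ->
  (forall k, 0 < alpha k) ->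
  (forall k, 0 < L k) -> (forall k, 0 < Vd k) -> (forall k, 0 < Rk k) ->
  (forall t Vc : 'I_K -> R, optimal Vctot alpha L Vd Rk t Vc ->
     exists theta omega : R, 0 < theta /\ 0 < omega /\
       (forall k, t k = Vc k * posp (Num.sqrt (alpha k * L k * Rk k / theta) - Vd k)
                         / (Rk k * (Vd k + Vc k))) /\
       (forall k, Vc k = t k * Rk k * posp (Num.sqrt (alpha k * L k / omega) - Vd k)
                         / (t k * Rk k + Vd k)) /\
       \sum_(k < K) t k = 1 /\ \sum_(k < K) Vc k = Vctot).
Proof.
move=> hK hVc ha hL hVd hR t V [[ht [st [hV0 sV]]] opt].
have nobetter : forall t' V', feasible Vctot t' V' ->
    objective alpha L Vd Rk t' V' < objective alpha L Vd Rk t V -> False.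
  by move=> t' V' hf hlt; have := opt t' V' hf; rewrite leNgt hlt.
have objV : forall t V, objective alpha L Vd Rk t V =
    Gsum alpha L Vd (fun _ => 1) V (fun k => t k * Rk k).
  by move=> t0 V1; apply: eq_bigr => k _; rewrite Dbar_sym.
have h1 : forall m : 'I_K, (0 : R) < 1 by move=> m; exact: ltr01.
have htR : forall m, 0 <= t m * Rk m by move=> m; rewrite mulr_ge0 // ltW.
have [j [htj hVj]] : exists j, 0 < t j /\ 0 < V j.
  case: (boolP [exists j, (0 < t j) && (0 < V j)]) => [/existsP [j /andP [h2 h3]]|hne].
    by exists j.
  exfalso.
  have Dfl : forall k, Dbar (L k) (Vd k) (Rk k) (t k) (V k) = L k / Vd k.
    move=> k; move/existsPn: hne => /(_ k); rewrite negb_and -!leNgt => /orP [h|h].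
      have -> : t k = 0 by apply: le_anti; rewrite h ht.
      by rewrite Dbar_x0.
    have -> : V k = 0 by apply: le_anti; rewrite h hV0.
    by rewrite Dbar_y0 // ltW.
  pose i0 : 'I_K := Ordinal hK.
  pose t' k : R := if k == i0 then 1 else 0.
  pose V' k : R := if k == i0 then Vctot else 0.
  apply: (nobetter t' V').
    split; [|split; [|split]].
    - by move=> k; rewrite /t'; case: ifP => _ //; exact: ler01.
    - rewrite (@sum1 t' (fun _ => 0) i0); first by rewrite big1 // /t' eqxx subr0 add0r.
      by move=> k hk; rewrite /t' (negbTE hk).
    - by move=> k; rewrite /V'; case: ifP => _ //; exact: ltW.
    - rewrite (@sum1 V' (fun _ => 0) i0); first by rewrite big1 // /V' eqxx subr0 add0r.
      by move=> k hk; rewrite /V' (negbTE hk).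
  apply: (@sum_lt _ _ i0) => [k|].
    rewrite Dfl ler_pM2l //; apply: Dbar_le; [exact: ltW | exact: hVd | exact: hR | |].
      by rewrite /t'; case: ifP => _ //; exact: ler01.
    by rewrite /V'; case: ifP => _ //; exact: ltW.
  rewrite Dfl ltr_pM2l //; apply: Dbar_lt; [exact: hL | exact: hVd | exact: hR | |].
    by rewrite /t' eqxx; exact: ltr01.
  by rewrite /V' eqxx.
have S2 : forall k, 0 < t k -> 0 < V k.
  move=> k htk; case: (ltrP 0 (V k)) => // hle; exfalso.
  have hVk : V k = 0 by apply: le_anti; rewrite hle hV0.
  have hkj : k != j by apply/eqP => e; move: hVj; rewrite -e hVk ltxx.
  have [t' [ht' [st' hlt]]] := gen_move alpha L Vd Rk t V k j ha hL hVd hR ht hV0 hkj htk hVk hVj.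
  apply: (nobetter t' V) => //.
  by split => //; split; [rewrite st' | split].
have S3 : forall k, 0 < V k -> 0 < t k.
  move=> k hVk; case: (ltrP 0 (t k)) => // hle; exfalso.
  have htk : t k = 0 by apply: le_anti; rewrite hle ht.
  have hkj : k != j by apply/eqP => e; move: htj; rewrite -e htk ltxx.
  have htk0 : t k * Rk k = 0 by rewrite htk mul0r.
  have [V' [hV' [sV' hlt]]] := gen_move alpha L Vd (fun _ => 1) V (fun k => t k * Rk k) k j
    ha hL hVd h1 hV0 htR hkj hVk htk0 (mulr_gt0 htj (hR j)).
  apply: (nobetter t V').
    by split => //; split => //; split => //; rewrite sV'.
  by rewrite !objV.
have S4 : \sum_(k < K) t k = 1.
  apply/eqP; rewrite eq_le st /= leNgt; apply/negP => hlt.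
  have hd : 0 < 1 - \sum_(k < K) t k by rewrite subr_gt0.
  have [t' [ht' [st' hlt']]] := gen_incr alpha L Vd Rk t V j (1 - \sum_(k < K) t k)
    ha hL hVd hR ht hd hVj.
  apply: (nobetter t' V) => //.
  split => //; split; last by split.
  by rewrite st' addrC subrK.
have S5 : \sum_(k < K) V k = Vctot.
  apply/eqP; rewrite eq_le sV /= leNgt; apply/negP => hlt.
  have hd : 0 < Vctot - \sum_(k < K) V k by rewrite subr_gt0.
  have [V' [hV' [sV' hlt']]] := gen_incr alpha L Vd (fun _ => 1) V (fun k => t k * Rk k) j
    (Vctot - \sum_(k < K) V k) ha hL hVd h1 hV0 hd (mulr_gt0 htj (hR j)).
  apply: (nobetter t V').
    split => //; split => //; split => //.
    by rewrite sV' addrC subrK.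
  by rewrite !objV.
have S6 : forall i k, 0 < t i -> 0 < t k ->
    gfun alpha L Vd Rk t V i = gfun alpha L Vd Rk t V k.
  suff H : forall i k, 0 < t i -> 0 < t k ->
      ~ (gfun alpha L Vd Rk t V k < gfun alpha L Vd Rk t V i).
    move=> i k hi hk; apply/eqP; rewrite eq_le !leNgt; apply/andP; split; apply/negP.
      exact: H.
    exact: H.
  move=> i k hti htk hlt.
  have hik : i != k by apply/eqP => e; move: hlt; rewrite e ltxx.
  have [t' [ht' [st' hlt']]] := gen_transfer alpha L Vd Rk t V i k ha hL hVd hR ht hV0
    hik htk (S2 i hti) (S2 k htk) hlt.
  apply: (nobetter t' V) => //.
  by split => //; split; [rewrite st' | split].
have S7 : forall i k, 0 < t i -> 0 < t k ->
    gfun alpha L Vd (fun _ => 1) V (fun k => t k * Rk k) i =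
    gfun alpha L Vd (fun _ => 1) V (fun k => t k * Rk k) k.
  suff H : forall i k, 0 < t i -> 0 < t k ->
      ~ (gfun alpha L Vd (fun _ => 1) V (fun k => t k * Rk k) k <
         gfun alpha L Vd (fun _ => 1) V (fun k => t k * Rk k) i).
    move=> i k hi hk; apply/eqP; rewrite eq_le !leNgt; apply/andP; split; apply/negP.
      exact: H.
    exact: H.
  move=> i k hti htk hlt.
  have hik : i != k by apply/eqP => e; move: hlt; rewrite e ltxx.
  have [V' [hV' [sV' hlt']]] := gen_transfer alpha L Vd (fun _ => 1) V (fun k => t k * Rk k) i k
    ha hL hVd h1 hV0 htR hik (S2 k htk) (mulr_gt0 hti (hR i)) (mulr_gt0 htk (hR k)) hlt.
  apply: (nobetter t V').
    by split => //; split => //; split => //; rewrite sV'.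
  by rewrite !objV.
have hdj : 0 < den (Vd j) (Rk j) (t j) (V j) by apply: den_pos => //; exact: ltW.
have hdj' : 0 < den (Vd j) 1 (V j) (t j * Rk j).
  apply: den_pos; [exact: hVd | exact: ltr01 | exact: hV0 | exact: mulr_gt0 htj (hR j)].
exists (gfun alpha L Vd Rk t V j), (gfun alpha L Vd (fun _ => 1) V (fun k => t k * Rk k) j).
split.
  by rewrite /gfun divr_gt0 ?exprn_gt0 // !mulr_gt0 ?exprn_gt0.
split.
  by rewrite /gfun divr_gt0 ?exprn_gt0 // !mulr_gt0 ?exprn_gt0 ?mulr_gt0.
split.
  move=> k; case: (ltrP 0 (t k)) => htk.
    rewrite (S6 j k htj htk) /gfun; apply: formula => //; exact: S2.
  have htk0 : t k = 0 by apply: le_anti; rewrite htk ht.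
  have hVk0 : V k = 0.
    apply: le_anti; rewrite hV0 andbT leNgt; apply/negP => h.
    by move: (S3 k h); rewrite htk0 ltxx.
  by rewrite htk0 hVk0 !mul0r.
split; last by split.
move=> k; case: (ltrP 0 (t k)) => htk.
  rewrite (S7 j k htj htk) /gfun.
  have := formula (alpha k) (L k) (Vd k) 1 (V k) (t k * Rk k) (ha k) (hL k) (hVd k) ltr01
    (hV0 k) (mulr_gt0 htk (hR k)).
  by rewrite !mulr1 mul1r [Vd k + _]addrC.
have htk0 : t k = 0 by apply: le_anti; rewrite htk ht.
have hVk0 : V k = 0.
  apply: le_anti; rewrite hV0 andbT leNgt; apply/negP => h.
  by move: (S3 k h); rewrite htk0 ltxx.
by rewrite htk0 hVk0 !mul0r.
Qed.

End S.
End Helpers.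

Theorem theorem5 (R : realType) (K : nat) (Vctot : R)
  (alpha L Vd Rk : 'I_K -> R) :
  (1 <= K)%N -> 0 < Vctot ->
  (forall k, 0 < alpha k) -> \sum_(k < K) alpha k = 1 ->
  (forall k, 0 < L k) -> (forall k, 0 < Vd k) -> (forall k, 0 < Rk k) ->
  (exists t Vc : 'I_K -> R, optimal Vctot alpha L Vd Rk t Vc) /\
  (forall t Vc : 'I_K -> R, optimal Vctot alpha L Vd Rk t Vc ->
     exists theta omega : R, 0 < theta /\ 0 < omega /\
       (forall k, t k = Vc k * posp (Num.sqrt (alpha k * L k * Rk k / theta) - Vd k)
                         / (Rk k * (Vd k + Vc k))) /\
       (forall k, Vc k = t k * Rk k * posp (Num.sqrt (alpha k * L k / omega) - Vd k)
                         / (t k * Rk k + Vd k)) /\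
       \sum_(k < K) t k = 1 /\ \sum_(k < K) Vc k = Vctot).
Proof.
move=> hK hV ha hsum hL hVd hR; split.
  by apply: exists_opt => //; exact: ltW.
by apply: part2.
Qed.
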